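(* Let $G$ be a finite group with identity $e$ and $H$ a normal subgroup of $G$. Then $\Gamma_{G,H}$ admits a total perfect code if and only if one of the following holds: (1) $|H|=2$, and every $x\in G\setminus H$ with $x^2\in H$ is an involution; (2) there exist $n\ge 0$ and an isomorphism $G\cong\mathbb{Z}_2^n\times\mathbb{Z}_3$ mapping $H$ onto $\{0\}^n\times\mathbb{Z}_3=\{(0,\dots,0,0),(0,\dots,0,1),(0,\dots,0,2)\}$.
   Context: For a normal subgroup $H$ of a finite group $G$ with identity $e$, the subgroup sum graph $\Gamma_{G,H}$ is the simple undirected graph with vertex set $G$ in which distinct vertices $x,y$ are adjacent if and only if $xy\in H\setminus\{e\}$. A total perfect code in a graph is a set $C$ of vertices such that every vertex of the graph (whether in $C$ or not) has exactly one neighbour in $C$. An involution is an element of order exactly $2$. *)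

(* Defs.v *)
From HB Require Import structures.
From mathcomp Require Import all_boot all_algebra all_fingroup all_solvable.
Set Implicit Arguments. Unset Strict Implicit. Unset Printing Implicit Defensive.
Local Open Scope group_scope.

Definition ssg_adj (gT : finGroupType) (G H : {set gT}) (x y : gT) : bool :=
  [&& x \in G, y \in G, x != y & x * y \in H^#].

Definition total_perfect_code (gT : finGroupType) (G H C : {set gT}) : Prop :=
  C \subset G /\ forall v, v \in G -> #|[set c in C | ssg_adj G H v c]| = 1%N.

Definition has_tpc (gT : finGroupType) (G H : {set gT}) : Prop :=
  exists C : {set gT}, total_perfect_code G H C.

(* Main.v *)
Require Import Defs.
From HB Require Import structures.
From mathcomp Require Import all_boot all_algebra all_fingroup all_solvable.
From mathcomp Require Import zify.
Set Implicit Arguments. Unset Strict Implicit. Unset Printing Implicit Defensive.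
Local Open Scope group_scope.

Lemma count_contra (T : finType) (B X : {set T}) :
  B \subset X -> 2 < #|X| -> (forall w, w \in X -> #|B :\ w| = 1%N) -> False.
Proof.
move=> sBX X3 hw.
have [w0 Xw0] : exists w, w \in X.
  by apply/set0Pn; rewrite -card_gt0; apply: leq_trans X3.
have /set0Pn [b /setD1P [_ Bb]] : B :\ w0 != set0 by rewrite -card_gt0 (hw w0 Xw0).
have B2 : #|B| = 2%N by rewrite (cardsD1 b) Bb (hw b (subsetP sBX b Bb)).
have : ~~ (X \subset B).
  by apply: contraL X3 => /subset_leq_card; rewrite B2 -leqNgt.
case/subsetPn => w Xw nBw; have := hw w Xw.
by move: B2; rewrite (cardsD1 w) (negbTE nBw) add0n => ->.
Qed.

Lemma rV2_abelem n : 2.-abelem [set: 'rV['Z_2]_n].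
Proof.
apply/abelemP => //; split.
  apply/centsP => u _ w _; exact: (GRing.addrC u w).
move=> u _; rewrite [u ^+ 2]/(u + u)%R.
apply/matrixP => i j; rewrite !mxE.
by case: (u i j) => [[|[|//]]] ?; apply/val_inj.
Qed.

Section S.
Variables (gT : finGroupType) (G H : {group gT}).
Hypothesis nHG : H <| G.

Let sHG : H \subset G. Proof. by case/andP: nHG. Qed.
Let nH x : x \in G -> x \in 'N(H).
Proof. by move=> Gx; case/andP: nHG => _ /subsetP; apply. Qed.

Lemma adjE v c : v \in G -> ssg_adj G H v c = (v != c) && (v * c \in H^#).
Proof.
move=> Gv; rewrite /ssg_adj Gv /=.
case: (boolP (v * c \in H^#)) => [/setD1P[_ Hvc]|]; rewrite ?andbT ?andbF //.
have -> // : c \in G.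
by rewrite -(mulKg v c) groupM ?groupV // (subsetP sHG).
Qed.


Lemma H3_gen : #|H| = 3%N -> exists d, [/\ d \in H, #[d] = 3%N &
  forall y, y \in H -> exists2 i, (i < 3)%N & y = d ^+ i].
Proof.
move=> H3; have : (0 < #|H^#|)%N by move: H3; rewrite (cardsD1 1) group1 add1n => [[->]].
rewrite card_gt0 => /set0Pn [d /setD1P [d1 Hd]].
have od : #[d] = 3%N.
  by apply: nt_prime_order => //; rewrite -H3 expg_cardG.
exists d; split => // y Hy.
have : <[d]> == H by rewrite eqEcard cycle_subG Hd -orderE od H3 /=.
move/eqP=> eH; rewrite -eH in Hy; case/cycleP: Hy => i ->.
exists (i %% 3)%N; first by rewrite ltn_mod.
by rewrite -{1}od expg_mod_order.
Qed.

Lemma dexp_eq (d : gT) i j : #[d] = 3%N -> (d ^+ i == d ^+ j) = (i == j %[mod 3])%N.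
Proof. by move=> od; rewrite eq_expg_mod_order od. Qed.
Section TPC.
Variable C : {set gT}.
Hypothesis sCG : C \subset G.
Hypothesis hS : forall v, v \in G -> #|[set c in C | ssg_adj G H v c]| = 1%N.

Lemma S1P v : v \in G -> exists s, [set c in C | ssg_adj G H v c] = [set s].
Proof. by move=> Gv; apply/cards1P; rewrite hS. Qed.

Lemma Suniq v a b : v \in G -> a \in C -> b \in C -> ssg_adj G H v a ->
  ssg_adj G H v b -> a = b.
Proof.
move=> Gv Ca Cb va vb; have [s hs] := S1P Gv.
have : a \in [set c in C | ssg_adj G H v c] by rewrite inE Ca.
have : b \in [set c in C | ssg_adj G H v c] by rewrite inE Cb.
by rewrite hs !inE => /eqP -> /eqP ->.
Qed.

Lemma Sex v : v \in G -> exists2 s, s \in C & ssg_adj G H v s.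
Proof.
move=> Gv; have [s hs] := S1P Gv.
have : s \in [set c in C | ssg_adj G H v c] by rewrite hs set11.
by rewrite inE => /andP[]; exists s.
Qed.

Lemma tpc_d : exists d, [/\ d \in H, d != 1, d \in C, 1 \in C &
   forall y, y \in H -> [\/ y = 1, y = d | y = d^-1]].
Proof.
have G1 : (1 : gT) \in G := group1 G.
have [d Cd] := Sex G1; rewrite adjE // mul1g => /andP[nd /setD1P[d1 Hd]].
have Gd : d \in G := subsetP sHG d Hd.
have [e Ce] := Sex Gd; rewrite adjE // => /andP[de /setD1P[de1 Hde]].
have He : e \in H by rewrite -(mulKg d e) groupM ?groupV.
have C1 : (1 : gT) \in C.
  case: (eqVneq e 1) => [<- //|e1].
  have eed : e = d.
    apply: (Suniq G1) => //; rewrite adjE // mul1g.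
      by rewrite eq_sym e1 !inE e1 He.
    by rewrite eq_sym d1 !inE d1 Hd.
  by rewrite eed eqxx in de.
exists d; split => // y Hy.
have Gy : y \in G := subsetP sHG y Hy.
case: (eqVneq y 1) => [->|y1]; first by constructor 1.
case: (eqVneq y d) => [->|yd]; first by constructor 2.
case: (eqVneq y d^-1) => [->|yd']; first by constructor 3.
suff h : (1 : gT) = d by rewrite -h eqxx in d1.
apply: (Suniq Gy) => //; rewrite adjE //.
  by rewrite mulg1 !inE y1 Hy.
by rewrite yd !inE mulg_eq1 yd' groupM.
Qed.

Lemma tpc_card : (1 < #|H| <= 3)%N.
Proof.
have [d [Hd d1 _ _ hy]] := tpc_d.
apply/andP; split.
  rewrite (cardsD1 1) group1 add1n ltnS card_gt0; apply/set0Pn; exists d.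
  by rewrite !inE d1.
have -> : #|H| = #|[set 1; d; d^-1]|.
  apply: eq_card => y; rewrite !inE; apply/idP/idP.
    by case/hy=> ->; rewrite eqxx ?orbT.
  by case/orP=> [/orP[]|] /eqP->; rewrite ?groupV ?group1.
apply: leq_trans (leq_card_setU _ _) _; rewrite cards1 addn1 ltnS.
by apply: leq_trans (leq_card_setU _ _) _; rewrite !cards1.
Qed.

Lemma tpc_case2 : #|H| = 2%N ->
  forall x, x \in G :\: H -> x ^+ 2 \in H -> #[x] = 2%N.
Proof.
move=> H2 x /setDP[Gx nHx] Hx2.
have [d [Hd d1 _ _ _]] := tpc_d.
have Hs1 : forall y, y \in H^# -> y = d.
  move=> y Hy; have : #|H^#| <= 1.
    by move: H2; rewrite (cardsD1 1) group1 add1n => [[->]].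
  by move/card_le1_eqP; apply => //; rewrite !inE d1.
apply: nt_prime_order => //; last by apply: contraNneq nHx => ->.
apply/eqP; apply: contraNT nHx => x21.
have [s Cs] := Sex Gx; rewrite adjE // => /andP[xs /Hs1 xsd].
have /Hs1 : x ^+ 2 \in H^# by rewrite !inE x21.
by rewrite -xsd expgS expg1 => /mulgI xxs; rewrite xxs eqxx in xs.
Qed.

Hypothesis H3 : #|H| = 3%N.

Lemma x2H x : x \in G -> x ^+ 2 \in H.
Proof.
move=> Gx; apply: contraT => nx2; exfalso.
pose X := x^-1 *: H; pose B := C :&: X.
apply: (@count_contra _ B X); first exact: subsetIr.
  by rewrite card_lcoset H3.
move=> w Xw; have xwH : x * w \in H by move: Xw; rewrite mem_lcoset invgK.
have Gw : w \in G by rewrite -(mulKg x w) groupM ?groupV // (subsetP sHG).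
rewrite -(hS (groupVr Gw)); apply: eq_card => c; rewrite !inE adjE ?groupV //.
rewrite !inE -eq_mulVg1 mem_lcoset invgK.
rewrite (_ : w^-1 * c = (x * w)^-1 * (x * c)); last by rewrite invMg !mulgA mulgKV.
rewrite (groupMl _ (groupVr xwH)).
case Hxc: (x * c \in H); rewrite ?andbF ?andbT //.
have -> : (w^-1 != c).
  apply: contra nx2 => /eqP wc.
  have -> : x ^+ 2 = (x * w^-1) * (x * w) ^ x by rewrite conjgE expgS expg1 !mulgA !mulgKV.
  by rewrite groupM // ?wc // memJ_norm // nH.
by rewrite andbC eq_sym.
Qed.

Lemma centH x y : x \in G -> y \in H -> commute x y.
Proof.
move=> Gx Hy.
have [d [Hd od hd]] := H3_gen H3.
suff cxd : commute x d.
  by have [i _ ->] := hd y Hy; apply: commuteX.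
have Hdx : d ^ x \in H by rewrite memJ_norm // nH.
have [i i3 di] := hd _ Hdx.
have d1 : d != 1 by rewrite -order_eq1 od.
case: i i3 di => [|[|[|//]]] _ di.
- by move/eqP: di; rewrite expg0 conjg_eq1 (negbTE d1).
- have h : commute d x by apply/commgP/conjg_fixP; rewrite di expg1.
  exact: (esym h).
exfalso.
have x2 : x ^+ 2 = 1.
  have [k k3 xk] := hd _ (x2H Gx).
  have : (x ^+ 2) ^ x = x ^+ 2 by rewrite conjXg conjgE mulKg.
  rewrite xk conjXg di -expgM => /eqP; rewrite dexp_eq //.
  by case: k k3 xk => [|[|[|//]]] _ xk h //; rewrite xk.
pose X := x *: H; pose B := C :&: X.
apply: (@count_contra _ B X); first exact: subsetIr.
  by rewrite card_lcoset H3.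
move=> w Xw; have xwH : x^-1 * w \in H by move: Xw; rewrite mem_lcoset.
have Gw : w \in G by rewrite -(mulKVg x w) groupM // (subsetP sHG).
have wV : w^-1 = w.
  have [j _ hj] := hd _ xwH.
  have ew : w = x * d ^+ j by rewrite -hj mulKVg.
  apply/eqP; rewrite eq_invg_mul ew.
  rewrite mulgA -(mulgA x (d ^+ j) x) (conjgC (d ^+ j) x) mulgA.
  rewrite -[x * x]/(x ^+ 2) x2 mul1g conjXg di -expgM -expgD -(expg0 d) dexp_eq //.
  by apply/eqP; lia.
rewrite -(hS Gw); apply: eq_card => c; rewrite !inE adjE //.
rewrite !inE mem_lcoset.
have -> : (w * c == 1) = (w == c) by rewrite (eq_mulVg1 w c) wV.
rewrite (_ : w * c = (x^-1 * w)^-1 * (x^-1 * c)); last first.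
  by rewrite invMg invgK !mulgA mulgK wV.
rewrite (groupMl _ (groupVr xwH)).
by rewrite (eq_sym w c); case: (c \in C); case: (c == w); case: (_ \in H).
Qed.

Lemma abelG : abelian G.
Proof.
apply/centsP => a Ga b Gb.
have [d [Hd od hd]] := H3_gen H3.
have Hc : [~ a, b] \in H.
  have -> : [~ a, b] = (a^+2)^-1 * (a*b^-1)^+2 * b^+2.
    by rewrite /commg conjgE !expgS !expg0 !mulg1 !invMg !mulgA !mulgKV.
  have Gab : a * b^-1 \in G by rewrite groupM ?groupV.
  apply: groupM; first apply: groupM; [rewrite groupV; exact: x2H | exact: x2H Gab | exact: x2H].
have cbc : commute b [~ a, b] := centH Gb Hc.
have := commgX 2 cbc.
have /commgP/eqP -> : commute a (b ^+ 2) := centH Ga (x2H Gb).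
have [i i3 ei] := hd _ Hc; rewrite ei -expgM => /esym/eqP.
rewrite -(expg0 d) dexp_eq // => h.
apply/commgP/eqP; rewrite ei.
by case: i i3 ei h => [|[|[|//]]].
Qed.
End TPC.

Definition P3 := [/\ abelian G, #|H| = 3%N & forall x, x \in G -> x ^+ 2 \in H].

Lemma tpc_cases : has_tpc G H ->
  (#|H| = 2%N /\ forall x, x \in G :\: H -> x ^+ 2 \in H -> #[x] = 2%N) \/ P3.
Proof.
case=> C [sCG hS].
have /andP[c1 c3] := tpc_card hS.
have [H2|H3] : #|H| = 2%N \/ #|H| = 3%N by lia.
  by left; split => //; apply: tpc_case2 hS H2.
right; split => //; first exact: abelG hS H3.
by move=> x Gx; apply: x2H hS H3 x Gx.
Qed.

Lemma case1_tpc : #|H| = 2%N ->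
  (forall x, x \in G :\: H -> x ^+ 2 \in H -> #[x] = 2%N) -> has_tpc G H.
Proof.
move=> H2 hx.
have /cards1P [h eh] : #|H^#| == 1%N.
  by move: H2; rewrite (cardsD1 1) group1 add1n => [[->]].
have /setD1P [h1 Hh] : h \in H^# by rewrite eh set11.
have nsq : forall v, v \in G -> v * v != h.
  move=> v Gv; apply/negP => /eqP vvh.
  case: (boolP (v \in H)) => Hv.
    case: (eqVneq v 1) => [v1|v1].
      by rewrite -vvh v1 mulg1 eqxx in h1.
    have : v \in H^# by rewrite !inE v1.
    rewrite eh inE => /eqP vh; move: vvh; rewrite vh => /(canRL (mulKg h)).
    by rewrite mulVg => /eqP; rewrite (negbTE h1).
  have : #[v] = 2%N by apply: hx; [rewrite inE Hv Gv | rewrite expgS expg1 vvh].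
  by move=> ov; move: h1; rewrite -vvh -(expg1 v) -expgS -ov expg_order eqxx.
exists G; split => // v Gv.
rewrite -(cards1 (v^-1 * h)); apply: eq_card => c; rewrite !inE adjE // eh !inE.
apply/idP/idP.
  by case/and3P => _ _ /eqP <-; rewrite mulKg.
move/eqP ->; rewrite mulKVg eqxx andbT groupM ?groupV ?Gv ?(subsetP sHG h Hh) //=.
apply: contra (nsq v Gv) => /eqP e.
by rewrite {2}e mulKVg.
Qed.

Lemma P3_tpc : P3 -> has_tpc G H.
Proof.
case=> abG H3 x2.
have [d [Hd od hd]] := H3_gen H3.
have Gd : d \in G := subsetP sHG d Hd.
have cG : forall a b, a \in G -> b \in G -> commute a b.
  by move=> a b Ga Gb; apply: (centsP abG).
exists [set x in G | x ^+ 4 != d ^+ 2]; split.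
  by apply/subsetP => x; rewrite inE => /andP[].
move=> v Gv.
have [m m3 vm] := hd _ (x2 v Gv).
have v6 : v ^+ 6 = 1.
  by rewrite (_ : 6 = 2 * 3)%N // expgM vm -expgM mulnC expgM -od expg_order expg1n.
have vinv : v^-1 = v ^+ 5 by apply/eqP; rewrite eq_invg_mul -expgS v6.
suff -> : [set c in [set x in G | x ^+ 4 != d ^+ 2] | ssg_adj G H v c] =
  [set v^-1 * d ^+ (if m == 1%N then 2%N else 1%N)] by rewrite cards1.
apply/setP => c; rewrite !inE adjE //.
have [y ->] : exists y, c = v^-1 * y by exists (v * c); rewrite mulKg.
rewrite !inE mulKVg (inj_eq (mulgI v^-1)).
have -> : (v == v^-1 * y) = (v ^+ 2 == y).
  by rewrite -(inj_eq (mulgI v)) mulKVg expgS expg1.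
case Hy: (y \in H); last first.
  rewrite !andbF; apply/esym/eqP => e.
  by rewrite e groupX in Hy.
have [j j3 ->] := hd y Hy.
rewrite groupM ?groupV ?groupX //= vm.
rewrite vinv expgMn; last by apply: cG; rewrite groupX.
rewrite -expgM (_ : 5 * 4 = 2 * 10)%N // expgM vm -!expgM -expgD.
rewrite -(expg0 d) !dexp_eq //.
by case: m m3 vm => [|[|[|//]]] _ _; case: j j3 => [|[|[|//]]].
Qed.

Lemma iso_P3 : (exists n : nat, exists f : {morphism G >-> ('rV['Z_2]_n * 'Z_3)%type},
       isom G [set: ('rV['Z_2]_n * 'Z_3)%type] f
       /\ f @* H = [set u : ('rV['Z_2]_n * 'Z_3)%type | u.1 == 0%R]) -> P3.
Proof.
case=> n [f [/isomP [injf imf] fH]].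
have mulC : forall u w : ('rV['Z_2]_n * 'Z_3)%type, u * w = w * u.
  move=> [u1 u2] [w1 w2].
  have -> : (u1, u2) * (w1, w2) = (u1 + w1, u2 + w2)%R by [].
  have -> : (w1, w2) * (u1, u2) = (w1 + u1, w2 + u2)%R by [].
  by rewrite (GRing.addrC u1) (GRing.addrC u2).
split.
- apply/centsP => a Ga b Gb; apply: (injmP injf); rewrite ?groupM //.
  by rewrite !morphM // mulC.
- rewrite -(card_injm injf sHG) fH.
  have -> : [set u : ('rV['Z_2]_n * 'Z_3)%type | u.1 == 0%R] = setX [set 0%R] setT.
    by apply/setP => u; rewrite !inE andbT.
  by rewrite cardsX cards1 cardsT card_ord.
move=> x Gx; have : f (x ^+ 2) \in f @* H.
  rewrite fH inE morphX // expgS expg1 [(f x * f x).1]/((f x).1 + (f x).1)%R.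
  apply/eqP/matrixP => i k; rewrite !mxE.
  by case: ((f x).1 i k) => [[|[|//]]] ?; apply/val_inj.
case/morphimP => y Gy Hy e.
by rewrite (injmP injf _ _ (groupX 2 Gx) Gy e).
Qed.

Lemma P3_iso : P3 -> exists n : nat, exists f : {morphism G >-> ('rV['Z_2]_n * 'Z_3)%type},
       isom G [set: ('rV['Z_2]_n * 'Z_3)%type] f
       /\ f @* H = [set u : ('rV['Z_2]_n * 'Z_3)%type | u.1 == 0%R].
Proof.
case=> abG H3 x2.
have [d [Hd od hd]] := H3_gen H3.
have Gd : d \in G := subsetP sHG d Hd.
have cG : forall a b, a \in G -> b \in G -> commute a b.
  by move=> a b Ga Gb; apply: (centsP abG).
pose T := [set x in G | x ^+ 2 == 1].
have gT_T : group_set T.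
  apply/group_setP; split; first by rewrite inE group1 expg1n eqxx.
  move=> x y; rewrite !inE => /andP[Gx /eqP x1] /andP[Gy /eqP y1].
  rewrite groupM //= expgMn; first by rewrite x1 y1 mulg1.
  exact: cG.
pose TG := Group gT_T.
have sTG : TG \subset G by apply/subsetP => x; rewrite inE => /andP[].
have abT : 2.-abelem TG.
  apply/abelemP => //; split; first exact: abelianS sTG abG.
  by move=> x; rewrite inE => /andP[_ /eqP].
pose n := logn 2 #|TG|.
have iso : [set: 'rV['Z_2]_n]%G \isog TG.
  rewrite isog_sym (isog_abelem_card _ abT) rV2_abelem cardsT card_mx card_ord mul1n.
  by rewrite /= [X in _ == X](card_pgroup (abelem_pgroup abT)).
case/isogP: iso => rho injr imr.
have Trho : forall w, rho w \in TG by move=> w; rewrite -imr mem_morphim ?inE.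
have Grho : forall w, rho w \in G by move=> w; apply: (subsetP sTG).
pose g := fun u : ('rV['Z_2]_n * 'Z_3)%type => rho u.1 * d ^+ u.2.
have gM : {in [set: ('rV['Z_2]_n * 'Z_3)%type] &, {morph g : u w / u * w}}.
  move=> [u1 u2] [w1 w2] _ _; rewrite /g /=.
  have -> : d ^+ ((u2 + w2) %% (Zp_trunc 3).+2) = d ^+ (u2 + w2).
    by rewrite -(expg_mod_order d (u2 + w2)) od.
  rewrite morphM ?inE //.
  rewrite expgD !mulgA -(mulgA (rho u1)) (cG (rho w1) (d ^+ u2)) ?groupX //.
  by rewrite !mulgA.
pose gm := Morphism gM.
have gmE : forall u, gm u = rho u.1 * d ^+ u.2 by [].
have injg : 'injm gm.
  apply/subsetP => -[u1 u2] ku; have := mker ku; rewrite gmE /= => e.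
  have er : rho u1 = (d ^+ u2)^-1 by rewrite -(mulgK (d ^+ u2) (rho u1)) e mul1g.
  have r1 : rho u1 = 1.
    have Hr : rho u1 \in H by rewrite er groupV groupX.
    have := Trho u1; rewrite inE => /andP[_].
    have [i i3 ei] := hd _ Hr; rewrite ei -expgM -{1}(expg0 d) dexp_eq // => h.
    by case: i i3 ei h => [|[|[|//]]].
  have u10 : u1 = 1 by apply/eqP; rewrite -(morph_injm_eq1 injr) ?inE ?r1.
  clear ku er; move: e; rewrite r1 mul1g => /eqP; rewrite -(expg0 d) dexp_eq // u10.
  by case: u2 => [[|[|[|//]]] ?] //= _; rewrite inE; apply/eqP; congr pair; apply/val_inj.
have img : gm @* setT = G.
  apply/eqP; rewrite eqEsubset; apply/andP; split.
    by apply/subsetP => _ /morphimP [u _ _ ->]; rewrite gmE groupM ?groupX.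
  apply/subsetP => x Gx.
  have x6 : x ^+ 6 = 1.
    by rewrite (_ : 6 = 2 * 3)%N // expgM -H3 expg_cardG ?x2.
  have Tx3 : x ^+ 3 \in TG by rewrite inE groupX //= -expgM x6.
  rewrite -imr in Tx3; case/morphimP: Tx3 => v _ _ ev.
  have H4 : x ^+ 4 \in H by rewrite (_ : 4 = 2 * 2)%N // expgM groupX ?x2.
  have [k k3 ek] := hd _ H4.
  apply/morphimP; exists (v, (Ordinal k3 : 'Z_3)); rewrite ?inE //.
  rewrite gmE /= -ev -ek -expgD (_ : 3 + 4 = 6 + 1)%N // expgD x6 mul1g.
  by rewrite expg1.
have sGD : G \subset gm @* setT by rewrite img.
exists n, (restrm sGD (invm injg)); split.
  apply/isomP; split; first exact: injm_restrm (injm_invm injg).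
  by rewrite im_restrm -img morphim_invm.
rewrite morphim_restrm (setIidPr sHG).
have -> : H :=: gm @* [set u : ('rV['Z_2]_n * 'Z_3)%type | u.1 == 0%R].
  apply/eqP; rewrite eqEsubset; apply/andP; split.
    apply/subsetP => y Hy; have [k k3 ->] := hd _ Hy.
    apply/morphimP; exists (1, (Ordinal k3 : 'Z_3)); rewrite ?inE //.
    by rewrite gmE /= morph1 mul1g.
  apply/subsetP => _ /morphimP [[u1 u2] _ Su ->].
  move: Su; rewrite inE /= => /eqP ->.
  have r0 : rho 0%R = 1 := morph1 rho.
  by rewrite /g /= r0 mul1g groupX.
by rewrite (morphim_invm injg (subsetT _)).
Qed.
End S.

Unset Implicit Arguments.

Theorem theorem5p2 (gT : finGroupType) (G H : {group gT}) (nHG : H <| G) :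
  has_tpc G H <->
  ( (#|H| = 2%N /\ forall x, x \in G :\: H -> x ^+ 2 \in H -> #[x] = 2%N)
  \/ exists n : nat, exists f : {morphism G >-> ('rV['Z_2]_n * 'Z_3)%type},
       isom G [set: ('rV['Z_2]_n * 'Z_3)%type] f
       /\ f @* H = [set u : ('rV['Z_2]_n * 'Z_3)%type | u.1 == 0%R] ).
Proof.
split.
  move=> h; case: (tpc_cases nHG h) => [h1|h3]; first by left.
  right.
  exact: (P3_iso nHG h3).
case=> [[H2 hx]|hiso].
  exact: (case1_tpc nHG H2 hx).
exact: (P3_tpc nHG (iso_P3 nHG hiso)).
Qed.
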